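(* Let $N$ be a probabilistic algorithmic knowledge structure, $i$ an agent, and $\phi$ a formula containing no occurrence of any $X_j$ operator. If $\mathtt{A}_i$ respects negation, is $\phi$-complete, and is $(\alpha,\beta)$-reliable for $\phi$ in $N$, then (a) $N\models X_i\phi\wedge\neg K_i\neg\phi\Rightarrow\left(\underline{\mathrm{Ev}}_i(\phi)\ge\frac{\alpha}{\alpha+\beta}\wedge\overline{\mathrm{Ev}}_i(\neg\phi)\le\frac{\beta}{\alpha+\beta}\right)$ if $(\alpha,\beta)\ne(0,0)$; (b) $N\models X_i\phi\wedge\neg K_i\neg\phi\Rightarrow\left(\underline{\mathrm{Ev}}_i(\phi)=1\wedge\overline{\mathrm{Ev}}_i(\neg\phi)=0\right)$ if $(\alpha,\beta)=(0,0)$; (c) $N\models X_i\neg\phi\wedge\neg K_i\phi\Rightarrow\left(\underline{\mathrm{Ev}}_i(\neg\phi)\ge\frac{1-\beta}{2-(\alpha+\beta)}\wedge\overline{\mathrm{Ev}}_i(\phi)\le\frac{1-\alpha}{2-(\alpha+\beta)}\right)$ if $(\alpha,\beta)\ne(1,1)$; (d) $N\models X_i\neg\phi\wedge\neg K_i\phi\Rightarrow\left(\underline{\mathrm{Ev}}_i(\neg\phi)\ge\frac12\wedge\overline{\mathrm{Ev}}_i(\phi)\le\frac12\right)$ if $(\alpha,\beta)=(1,1)$.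
   Context: A derandomizer is $v=(v_1,\dots,v_n)$ with each $v_i$ a sequence of coin-toss outcomes; $V$ is the set of derandomizers. A probabilistic algorithmic knowledge structure is $N=(S,\pi,L_1,\dots,L_n,\mathtt{A}^d_1,\dots,\mathtt{A}^d_n,\nu)$ with states $S$, truth assignments $\pi(s)$ to primitive propositions, local-state functions $L_i:S\to\mathcal{L}$, deterministic functions $\mathtt{A}^d_i(\psi,\ell,s,v_i)\in\{$''Yes'',''No'',''?''$\}$ (derandomized version of agent $i$'s knowledge algorithm $\mathtt{A}_i$), and a probability distribution $\nu$ on $V$ such that each answer set $\{v:\mathtt{A}^d_i(\psi,L_i(s),s,v_i)=a\}$ is nonempty iff it has positive $\nu$-probability. Semantics at pairs $(s,v)$: primitive propositions via $\pi$, $\neg,\wedge,\Rightarrow$ usual, $(N,s,v)\models K_i\psi$ iff $(N,t,v')\models\psi$ for all $v'\in V$ and all $t$ with $L_i(t)=L_i(s)$, $(N,s,v)\models X_i\psi$ iff $\mathtt{A}^d_i(\psi,L_i(s),s,v_i)=$''Yes'', $(N,s,v)\models\Pr(\psi)\ge\alpha$ iff $\nu(\{v':(N,s,v')\models\psi\})\ge\alpha$; $N\models\chi$ means $(N,s,v)\models\chi$ for all $s,v$. For $\psi$ with no $X_j$, write $(N,s)\models\psi$ (independent of $v$). For such $\psi$ and local state $\ell$ of agent $i$: $S_\ell=\{s:L_i(s)=\ell\}$, $S_{\ell,\psi}=\{s\in S_\ell:(N,s)\models\psi\}$, $S_{\ell,\neg\psi}=\{s\in S_\ell:(N,s)\models\neg\psi\}$;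 $\mu_{s,\psi}(\mathit{ob})=\nu(\{v':\mathtt{A}^d_i(\psi,L_i(s),s,v'_i)=\mathit{ob}\})$; $\mathcal{F}_{\ell,\psi}(\psi)=\{\mu_{s,\psi}:s\in S_{\ell,\psi}\}$, $\mathcal{F}_{\ell,\psi}(\neg\psi)=\{\mu_{s,\psi}:s\in S_{\ell,\neg\psi}\}$; evidence space $\mathcal{E}_{\mathtt{A}_i,\psi,\ell}=(\{\psi,\neg\psi\},\{$''Yes'',''No'',''?''$\},\mathcal{F}_{\ell,\psi})$. For $\mathcal{E}=(\mathcal{H},\mathcal{O},\mathcal{F})$, $\mathcal{W}_{\mathcal{E}}(\mathit{ob},h)$ is the set of values $\mu_h(\mathit{ob})/\sum_{h'\in\mathcal{H},\mathcal{F}(h')\ne\emptyset}\mu_{h'}(\mathit{ob})$ over all choices $\mu_{h'}\in\mathcal{F}(h')$ (one per $h'$ with $\mathcal{F}(h')\ne\emptyset$) with nonzero denominator; $\underline{w}_{\mathcal{E}}=\inf\mathcal{W}_{\mathcal{E}}$, $\overline{w}_{\mathcal{E}}=\sup\mathcal{W}_{\mathcal{E}}$, both $0$ if the set is empty. $(N,s,v)\models\underline{\mathrm{Ev}}_i(\psi)\ge\alpha$ iff $\underline{w}_{\mathcal{E}_{\mathtt{A}_i,\psi,L_i(s)}}(\mathtt{A}^d_i(\psi,L_i(s),s,v_i),\psi)\ge\alpha$, similarly for $\le,=$ and for $\overline{\mathrm{Ev}}_i$ with $\overline{w}$. $\mathtt{A}_i$ is $\phi$-complete if $\mathtt{A}^d_i(\phi,L_i(s),s,v_i)\in\{$''Yes'',''No''$\}$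 for all $s,v$. For $\alpha,\beta\in[0,1]$, $\mathtt{A}_i$ is $(\alpha,\beta)$-reliable for $\phi$ in $N$ if for all $s,v$: $(N,s,v)\models\phi$ implies $\mu_{s,\phi}($''Yes''$)\ge\alpha$, and $(N,s,v)\models\neg\phi$ implies $\mu_{s,\phi}($''Yes''$)\le\beta$. $\mathtt{A}_i$ weakly respects negation if for all $\psi,\ell,s,v$: $\mathtt{A}^d_i(\neg\psi,\ell,s,v_i)$ is ''Yes'' when $\mathtt{A}^d_i(\psi,\ell,s,v_i)=$''No'', ''No'' when it is ''Yes'', ''?'' when it is ''?''; it strongly respects negation if $\mathtt{A}^d_i(\neg\psi,\ell,s,v_i)$ is ''Yes'' when $\mathtt{A}^d_i(\psi,\ell,s,v_i)\ne$''Yes'' and ''No'' when it is ''Yes''; it respects negation if it weakly or strongly respects negation. *)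

(* Defs.v *)
From HB Require Import structures.
From mathcomp Require Import all_boot all_order all_algebra.
From mathcomp Require Import all_classical all_reals all_analysis.

Set Implicit Arguments.
Unset Strict Implicit.
Unset Printing Implicit Defensive.

Import Order.TTheory GRing.Theory Num.Theory.
Local Open Scope classical_set_scope.
Local Open Scope ring_scope.

Inductive answer := Yes | No | DontKnow.

(* Formulas of the logic (n agents, primitive propositions of type P,
   probability thresholds in R).  X_i is the algorithmic-knowledge operator,
   Pr(psi) >= a the probability operator. *)
Inductive pform (n : nat) (P : Type) (R : Type) : Type :=
| Prim of P
| Neg of pform n P R
| And of pform n P R & pform n P R
| Imp of pform n P R & pform n P R
| Know of 'I_n & pform n P R
| Xalg of 'I_n & pform n P R
| PrGe of pform n P R & R.

Arguments Prim {n P R}.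
Arguments Neg {n P R}.
Arguments And {n P R}.
Arguments Imp {n P R}.
Arguments Know {n P R}.
Arguments Xalg {n P R}.
Arguments PrGe {n P R}.

Fixpoint xfree n P R (f : pform n P R) : bool :=
  match f with
  | Prim _ => true
  | Neg g => xfree g
  | And g h => xfree g && xfree h
  | Imp g h => xfree g && xfree h
  | Know _ g => xfree g
  | Xalg _ _ => false
  | PrGe g _ => xfree g
  end.

(* V is the set of derandomizers: it is identified (via the bijection vcomp)
   with the tuples v = (v_1,...,v_n) of coin-toss sequences (of type C);
   vcomp v i is the component v_i.  Ad i psi l s c is the derandomized
   algorithm A^d_i(psi, l, s, c).  nu is a probability on V. *)
Record pak_structure (R : realType) (n : nat) (P C Lst : Type)
    (d : measure_display) (V : measurableType d) := PAK {
  state : Type;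
  pi : state -> P -> bool;
  L : 'I_n -> state -> Lst;
  vcomp : V -> 'I_n -> C;
  vcomp_bij : bijective vcomp;
  Ad : 'I_n -> pform n P R -> Lst -> state -> C -> answer;
  nu : probability V R;
  answer_set_measurable : forall i psi s a,
    measurable [set v | Ad i psi (L i s) s (vcomp v i) = a];
  answer_set_pos : forall i psi s a,
    [set v | Ad i psi (L i s) s (vcomp v i) = a] !=set0 <->
    (0 < nu [set v | Ad i psi (L i s) s (vcomp v i) = a])%E
}.

Arguments state {R n P C Lst d V} p.
Arguments pi {R n P C Lst d V} p.
Arguments L {R n P C Lst d V} p.
Arguments vcomp {R n P C Lst d V} p.
Arguments Ad {R n P C Lst d V} p.
Arguments nu {R n P C Lst d V} p.

Section Semantics.
Variables (R : realType) (n : nat) (P C Lst : Type) (d : measure_display)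
  (V : measurableType d).
Variable N : pak_structure R n P C Lst V.

Local Notation S := (state N).
Local Notation F := (pform n P R).

Fixpoint sat (s : S) (v : V) (f : F) {struct f} : Prop :=
  match f with
  | Prim p => pi N s p
  | Neg g => ~ sat s v g
  | And g h => sat s v g /\ sat s v h
  | Imp g h => sat s v g -> sat s v h
  | Know i g => forall (t : S) (v' : V), L N i t = L N i s -> sat t v' g
  | Xalg i g => Ad N i g (L N i s) s (vcomp N v i) = Yes
  | PrGe g a => (a%:E <= nu N [set v' | sat s v' g])%E
  end.

Definition valid (f : F) : Prop := forall (s : S) (v : V), sat s v f.

Definition mu (i : 'I_n) (psi : F) (s : S) (ob : answer) : R :=
  fine (nu N [set v | Ad N i psi (L N i s) s (vcomp N v i) = ob]).

(* S_{l,psi} and S_{l,~psi}; for X-free psi truth does not depend on v,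
   and we use "true for every derandomizer". *)
Definition S_l_psi (i : 'I_n) (l : Lst) (psi : F) : set S :=
  [set t | L N i t = l /\ forall v, sat t v psi].

(* F_{l,psi} : hypothesis true = psi, false = ~psi *)
Definition Fam (i : 'I_n) (psi : F) (l : Lst) (h : bool) : set (answer -> R) :=
  [set mu i psi t | t in S_l_psi i l (if h then psi else Neg psi)].

End Semantics.

Arguments sat {R n P C Lst d V} N.
Arguments valid {R n P C Lst d V} N.
Arguments mu {R n P C Lst d V} N.
Arguments S_l_psi {R n P C Lst d V} N.
Arguments Fam {R n P C Lst d V} N.

Definition Wset (R : realType) (Fm : bool -> set (answer -> R)) (ob : answer)
    (h : bool) : set R :=
  [set w | exists c : bool -> answer -> R,
     (forall h', Fm h' !=set0 -> Fm h' (c h')) /\ Fm h !=set0 /\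
     (\sum_(h' : bool | `[< Fm h' !=set0 >]) c h' ob) != 0 /\
     w = c h ob / (\sum_(h' : bool | `[< Fm h' !=set0 >]) c h' ob)].

Definition wlow (R : realType) (Fm : bool -> set (answer -> R)) ob h : R :=
  if `[< Wset Fm ob h = set0 >] then 0 else inf (Wset Fm ob h).
Definition wup (R : realType) (Fm : bool -> set (answer -> R)) ob h : R :=
  if `[< Wset Fm ob h = set0 >] then 0 else sup (Wset Fm ob h).

Section Evidence.
Variables (R : realType) (n : nat) (P C Lst : Type) (d : measure_display)
  (V : measurableType d).
Variable N : pak_structure R n P C Lst V.

Definition EvLow (i : 'I_n) (psi : pform n P R) (s : state N) (v : V) : R :=
  wlow (Fam N i psi (L N i s)) (Ad N i psi (L N i s) s (vcomp N v i)) true.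
Definition EvUp (i : 'I_n) (psi : pform n P R) (s : state N) (v : V) : R :=
  wup (Fam N i psi (L N i s)) (Ad N i psi (L N i s) s (vcomp N v i)) true.

Definition phi_complete (i : 'I_n) (phi : pform n P R) : Prop :=
  forall s v, Ad N i phi (L N i s) s (vcomp N v i) = Yes \/
              Ad N i phi (L N i s) s (vcomp N v i) = No.

Definition reliable (i : 'I_n) (phi : pform n P R) (a b : R) : Prop :=
  forall s v,
    (sat N s v phi -> a <= mu N i phi s Yes) /\
    (sat N s v (Neg phi) -> mu N i phi s Yes <= b).

Definition weakly_respects_negation (i : 'I_n) : Prop :=
  forall psi l s v,
    Ad N i (Neg psi) l s (vcomp N v i) =
    match Ad N i psi l s (vcomp N v i) with
    | No => Yes | Yes => No | DontKnow => DontKnow end.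

Definition strongly_respects_negation (i : 'I_n) : Prop :=
  forall psi l s v,
    Ad N i (Neg psi) l s (vcomp N v i) =
    match Ad N i psi l s (vcomp N v i) with
    | Yes => No | _ => Yes end.

Definition respects_negation (i : 'I_n) : Prop :=
  weakly_respects_negation i \/ strongly_respects_negation i.

End Evidence.

Arguments EvLow {R n P C Lst d V} N.
Arguments EvUp {R n P C Lst d V} N.
Arguments phi_complete {R n P C Lst d V} N.
Arguments reliable {R n P C Lst d V} N.
Arguments weakly_respects_negation {R n P C Lst d V} N.
Arguments strongly_respects_negation {R n P C Lst d V} N.
Arguments respects_negation {R n P C Lst d V} N.

(* Main.v *)
Require Import Defs.
From HB Require Import structures.
From mathcomp Require Import all_boot all_order all_algebra.
From mathcomp Require Import all_classical all_reals all_analysis.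
From mathcomp Require Import lra.
Import Order.TTheory GRing.Theory Num.Theory.
Local Open Scope classical_set_scope.
Local Open Scope ring_scope.

Lemma sumb (R : realType) (Fm : bool -> set (answer -> R)) (F : bool -> R) :
  \sum_(h : bool | `[< Fm h !=set0 >]) F h =
  (if `[< Fm true !=set0 >] then F true else 0) + (if `[< Fm false !=set0 >] then F false else 0).
Proof. by rewrite (big_mkcond (fun h => `[< Fm h !=set0 >])) big_bool. Qed.

Lemma Wset_char (R : realType) (Fm : bool -> set (answer -> R)) ob w :
  Wset Fm ob true w -> exists f, Fm true f /\
   ((~ (Fm false !=set0) /\ f ob != 0 /\ w = f ob / f ob) \/
    exists g, Fm false g /\ f ob + g ob != 0 /\ w = f ob / (f ob + g ob)).
Proof.
move=> [c [Hc [Hne [Hs ->]]]].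
have Ht := Hc true Hne.
move: Hs; rewrite sumb /= asboolT //.
case: (pselect (Fm false !=set0)) => Hf.
  rewrite asboolT // => Hs; exists (c true); split => //; right.
  by exists (c false); split => //; apply: Hc.
rewrite asboolF // addr0 => Hs; exists (c true); split => //; left.
by [].

Qed.

Lemma Wset_ne (R : realType) (Fm : bool -> set (answer -> R)) ob :
  (forall h f, Fm h f -> 0 <= f ob) ->
  (exists h f, Fm h f /\ 0 < f ob) -> Fm true !=set0 ->
  Wset Fm ob true !=set0.
Proof.
move=> Hnn [h [f [Hf Hp]]] Hne.
have [g Hg] : exists g, forall h', Fm h' !=set0 -> Fm h' (g h').
  exists (fun h' => if pselect (Fm h' !=set0) is left H then projT1 (cid H) else f).
  by move=> h' H; case: pselect => // H'; exact: projT2 (cid H').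
pose c := fun h' => if h' == h then f else g h'.
have Hc : forall h', Fm h' !=set0 -> Fm h' (c h').
  by move=> h' H; rewrite /c; case: eqP => [->|_]; [done | exact: Hg].
have Hsum : 0 < \sum_(h' : bool | `[< Fm h' !=set0 >]) c h' ob.
  rewrite sumb /=.
  have Hn : forall h', 0 <= (if `[< Fm h' !=set0 >] then c h' ob else 0).
    move=> h'; case: asboolP => // H; exact: Hnn (Hc _ H).
  have Hh : 0 < (if `[< Fm h !=set0 >] then c h ob else 0).
    by rewrite asboolT; [rewrite /c eqxx | exists f].
  have := Hn true; have := Hn false; have : h = true \/ h = false by case: (h); auto.
  by case=> E; rewrite E in Hh; lra.
exists (c true ob / \sum_(h' : bool | `[< Fm h' !=set0 >]) c h' ob).
exists c; split => //; split => //; split => //; exact: lt0r_neq0.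
Qed.

Lemma R1 (R : realType) (A B x y : R) : 0 <= A -> 0 <= B -> 0 < A + B ->
  A <= x -> 0 <= y <= B -> x + y != 0 -> A / (A + B) <= x / (x + y).
Proof.
move=> hA hB hAB hx /andP[hy hyB] hn.
have hxy : 0 < x + y by rewrite lt0r hn /=; lra.
rewrite ler_pdivrMr // mulrAC ler_pdivlMr //; nra.
Qed.

Lemma R2 (R : realType) (A B x y : R) : 0 <= A -> 0 <= B -> 0 < A + B ->
  A <= x -> 0 <= y <= B -> y + x != 0 -> y / (y + x) <= B / (A + B).
Proof.
move=> hA hB hAB hx /andP[hy hyB] hn.
have hxy : 0 < y + x by rewrite lt0r hn /=; lra.
rewrite ler_pdivrMr // mulrAC ler_pdivlMr //; nra.
Qed.

Lemma LOW (R : realType) (Fm : bool -> set (answer -> R)) ob (A B : R) :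
  0 <= A -> 0 <= B ->
  (forall f, Fm true f -> A <= f ob) ->
  (forall f, Fm false f -> 0 <= f ob <= B) ->
  (exists h f, Fm h f /\ 0 < f ob) -> Fm true !=set0 ->
  (0 < A + B -> A / (A + B) <= wlow Fm ob true) /\
  (B = 0 -> wlow Fm ob true = 1).
Proof.
move=> hA hB HT HF Hp Hne.
have Hnn : forall h f, Fm h f -> 0 <= f ob.
  case=> f Hf; [exact: le_trans hA (HT f Hf) | by case/andP: (HF f Hf)].
have HW := @Wset_ne R Fm ob Hnn Hp Hne.
have Hel : forall w, Wset Fm ob true w -> exists x y, A <= x /\ 0 <= y <= B /\
    x + y != 0 /\ w = x / (x + y).
  move=> w /(@Wset_char R Fm ob) [f [Hf [[_ [H1 H2]] | [g [Hg [H1 H2]]]]]].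
    by exists (f ob), 0; rewrite addr0 lexx hB; split => //; exact: HT.
  by exists (f ob), (g ob); split; [exact: HT | split; [exact: HF | by []]].
rewrite /wlow asboolF; last first.
  by move=> E; move: HW; rewrite E => -[].
split=> [hAB | hB0].
  apply: lb_le_inf => // w /Hel [x [y [hx [hy [hn ->]]]]]; exact: R1.
have E : Wset Fm ob true = [set 1].
  have H1 : forall w, Wset Fm ob true w -> w = 1.
    move=> w /Hel [x [y [hx [hy [hn ->]]]]].
    have y0 : y = 0 by move: hy; rewrite hB0; lra.
    by move: hn; rewrite y0 addr0 => hn; rewrite mulfV.
  apply/seteqP; split => w; first exact: H1.
  move=> /= ->; case: HW => w0 Hw0; by rewrite -(H1 _ Hw0).
by rewrite E inf1.
Qed.

Lemma UP (R : realType) (Fm : bool -> set (answer -> R)) ob (A B : R) :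
  0 <= A -> 0 <= B ->
  (forall f, Fm true f -> 0 <= f ob <= B) ->
  (forall f, Fm false f -> A <= f ob) ->
  Fm false !=set0 ->
  (0 < A + B -> wup Fm ob true <= B / (A + B)) /\
  (B = 0 -> wup Fm ob true = 0).
Proof.
move=> hA hB HT HF Hne.
have Hel : forall w, Wset Fm ob true w -> exists x y, A <= x /\ 0 <= y <= B /\
    y + x != 0 /\ w = y / (y + x).
  move=> w /(@Wset_char R Fm ob) [f [Hf [[H0 _] | [g [Hg [H1 H2]]]]]]; first by [].
  by exists (g ob), (f ob); split => //; [exact: HF | split => //; exact: HT].
rewrite /wup; case: asboolP => [_ | HW].
  split=> [hAB|//]; apply: divr_ge0 => //; lra.
have {}HW : Wset Fm ob true !=set0.
  apply/set0P; apply/eqP => E; exact: HW.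
split=> [hAB | hB0].
  apply: ge_sup => // w /Hel [x [y [hx [hy [hn ->]]]]]; exact: R2.
have E : Wset Fm ob true = [set 0].
  have H1 : forall w, Wset Fm ob true w -> w = 0.
    move=> w /Hel [x [y [hx [hy [hn ->]]]]].
    have y0 : y = 0 by move: hy; rewrite hB0; lra.
    by rewrite y0 mul0r.
  apply/seteqP; split => w; first exact: H1.
  move=> /= ->; case: HW => w0 Hw0; by rewrite -(H1 _ Hw0).
by rewrite E sup1.
Qed.

Section Conc.
Variables (R : realType) (n : nat) (P C Lst : Type) (d : measure_display)
  (V : measurableType d) (N : pak_structure R n P C Lst V).

Lemma nu_fin (i : 'I_n) psi t ob :
  (nu N [set v | Ad N i psi (L N i t) t (vcomp N v i) = ob] \is a fin_num)%E.
Proof. apply: fin_num_measure; exact: answer_set_measurable. Qed.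

Lemma mu_ge0 (i : 'I_n) psi t ob : 0 <= mu N i psi t ob.
Proof. by apply: fine_ge0; apply: measure_ge0. Qed.

Lemma mu_gt0 (i : 'I_n) psi t ob v :
  Ad N i psi (L N i t) t (vcomp N v i) = ob -> 0 < mu N i psi t ob.
Proof.
move=> H; apply: fine_gt0; apply/andP; split.
  by apply: (answer_set_pos (p:=N) i psi t ob).1; exists v.
by rewrite ltey_eq nu_fin.
Qed.

Lemma mu_compl (i : 'I_n) phi t :
  phi_complete N i phi -> mu N i phi t No = 1 - mu N i phi t Yes.
Proof.
move=> Hc.
set Y := [set v | Ad N i phi (L N i t) t (vcomp N v i) = Yes].
set Nn := [set v | Ad N i phi (L N i t) t (vcomp N v i) = No].
have U : Y `|` Nn = setT.
  apply/seteqP; split => // v _; case: (Hc t v) => H; [left | right]; exact: H.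
have D : Y `&` Nn = set0.
  apply/seteqP; split => // v [H1 H2]; move: H1 H2; rewrite /Y /Nn /= => -> //.
have := measureU (nu N) (answer_set_measurable (p:=N) i phi t Yes)
  (answer_set_measurable (p:=N) i phi t No) D.
rewrite U => E. have E1 := probability_setT (nu N). have E2 : (nu N Y + nu N Nn = 1)%E by rewrite -E; exact: E1.
rewrite /mu -/Y -/Nn.
have : 1 = fine (nu N Y) + fine (nu N Nn).
  by rewrite -fineD ?nu_fin // E2.
move=> ->; lra.
Qed.

Lemma sat_indep (f : pform n P R) : xfree f ->
  forall s v v', sat N s v f <-> sat N s v' f.
Proof.
elim: f => [p|g IH|g IHg h IHh|g IHg h IHh|j g IH|j g IH|g IH a] //= Hx s v v'.
- move: (IH Hx s v v') => [H1 H2]; split => H H'; apply: H; auto.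
- case/andP: Hx => Hg Hh; move: (IHg Hg s v v') (IHh Hh s v v') => [H1 H2] [H3 H4].
  split => -[]; auto.
- case/andP: Hx => Hg Hh; move: (IHg Hg s v v') (IHh Hh s v v') => [H1 H2] [H3 H4].
  split; auto.
Qed.

Lemma Fam_elim (i : 'I_n) psi l h f : Fam N i psi l h f ->
  exists t, [/\ L N i t = l, (forall v : V, sat N t v (if h then psi else Neg psi)) &
    mu N i psi t = f].
Proof. by case=> t [Hl Hs] Ef; exists t; split. Qed.

Lemma mu_neg_No (i : 'I_n) psi t : respects_negation N i ->
  mu N i (Neg psi) t No = mu N i psi t Yes.
Proof.
move=> Hr; rewrite /mu; congr fine; congr (nu N _).
apply/seteqP; split => v /=; case: Hr => H; rewrite H;
  by case: (Ad N i psi _ _ _).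
Qed.

Lemma mu_neg_Yes (i : 'I_n) phi t : respects_negation N i ->
  phi_complete N i phi ->
  mu N i (Neg phi) t Yes = mu N i phi t No.
Proof.
move=> Hr Hc; rewrite /mu; congr fine; congr (nu N _).
apply/seteqP; split => v /=; case: Hr => H; rewrite H;
  by case: (Hc t v) => ->.
Qed.

Lemma Hp_gen (i : 'I_n) psi s v ob : xfree psi ->
  Ad N i psi (L N i s) s (vcomp N v i) = ob ->
  exists h f, Fam N i psi (L N i s) h f /\ 0 < f ob.
Proof.
move=> Hx Hob; case: (pselect (sat N s v psi)) => Hs.
  exists true, (mu N i psi s); split; last exact: mu_gt0 Hob.
  exists s => //; split => // v'; exact/(sat_indep _ Hx s v v').1.
exists false, (mu N i psi s); split; last exact: mu_gt0 Hob.
exists s => //; split => // v' /= H; apply: Hs; exact/(sat_indep _ Hx s v' v).1.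
Qed.

End Conc.
Arguments LOW {R Fm ob A B}.
Arguments UP {R Fm ob A B}.
Arguments nu_fin {R n P C Lst d V N}.
Arguments mu_ge0 {R n P C Lst d V N}.
Arguments mu_gt0 {R n P C Lst d V N}.
Arguments mu_compl {R n P C Lst d V N}.
Arguments sat_indep {R n P C Lst d V N}.
Arguments Fam_elim {R n P C Lst d V N}.
Arguments mu_neg_No {R n P C Lst d V N}.
Arguments mu_neg_Yes {R n P C Lst d V N}.
Arguments Hp_gen {R n P C Lst d V N}.

Theorem proposition5p5 (R : realType) (n : nat) (P C Lst : Type)
    (d : measure_display) (V : measurableType d)
    (N : pak_structure R n P C Lst V) (i : 'I_n) (phi : pform n P R)
    (alpha beta : R) :
  xfree phi ->
  0 <= alpha <= 1 -> 0 <= beta <= 1 ->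
  respects_negation N i ->
  phi_complete N i phi ->
  reliable N i phi alpha beta ->
  (* (a) *)
  ((alpha, beta) <> (0, 0) ->
   forall (s : state N) (v : V),
     sat N s v (And (Xalg i phi) (Neg (Know i (Neg phi)))) ->
     alpha / (alpha + beta) <= EvLow N i phi s v /\
     EvUp N i (Neg phi) s v <= beta / (alpha + beta)) /\
  (* (b) *)
  ((alpha, beta) = (0, 0) ->
   forall (s : state N) (v : V),
     sat N s v (And (Xalg i phi) (Neg (Know i (Neg phi)))) ->
     EvLow N i phi s v = 1 /\ EvUp N i (Neg phi) s v = 0) /\
  (* (c) *)
  ((alpha, beta) <> (1, 1) ->
   forall (s : state N) (v : V),
     sat N s v (And (Xalg i (Neg phi)) (Neg (Know i phi))) ->
     (1 - beta) / (2 - (alpha + beta)) <= EvLow N i (Neg phi) s v /\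
     EvUp N i phi s v <= (1 - alpha) / (2 - (alpha + beta))) /\
  (* (d) *)
  ((alpha, beta) = (1, 1) ->
   forall (s : state N) (v : V),
     sat N s v (And (Xalg i (Neg phi)) (Neg (Know i phi))) ->
     1 / 2 <= EvLow N i (Neg phi) s v /\ EvUp N i phi s v <= 1 / 2).
Proof.
move=> Hx /andP[a0 a1] /andP[b0 b1] Hr Hc Hrel.
have HxN : xfree (Neg phi) by [].
have F1 : forall (v0 : V) l f, Fam N i phi l true f -> alpha <= f Yes.
  move=> v0 l f Hf; case: (Fam_elim _ _ _ _ _ Hf) => t [_ Hs <-]; exact: (Hrel t v0).1 (Hs v0).
have F2 : forall (v0 : V) l f, Fam N i phi l false f -> 0 <= f Yes <= beta.
  move=> v0 l f Hf; case: (Fam_elim _ _ _ _ _ Hf) => t [_ Hs <-]; rewrite mu_ge0 /=; exact: (Hrel t v0).2 (Hs v0).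
have F3 : forall (v0 : V) l f, Fam N i (Neg phi) l true f -> 0 <= f No <= beta.
  move=> v0 l f Hf; case: (Fam_elim _ _ _ _ _ Hf) => t [_ Hs <-]; rewrite mu_neg_No // mu_ge0 /=.
  exact: (Hrel t v0).2 (Hs v0).
have F4 : forall (v0 : V) l f, Fam N i (Neg phi) l false f -> alpha <= f No.
  move=> v0 l f Hf; case: (Fam_elim _ _ _ _ _ Hf) => t [_ Hs <-]; rewrite mu_neg_No //.
  apply: (Hrel t v0).1; case: (pselect (sat N t v0 phi)) => // H.
  by exfalso; apply: (Hs v0).
have F5 : forall (v0 : V) l f, Fam N i (Neg phi) l true f -> 1 - beta <= f Yes.
  move=> v0 l f Hf; case: (Fam_elim _ _ _ _ _ Hf) => t [_ Hs <-]; rewrite mu_neg_Yes // mu_compl //.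
  have := (Hrel t v0).2 (Hs v0); lra.
have F6 : forall (v0 : V) l f, Fam N i (Neg phi) l false f -> 0 <= f Yes <= 1 - alpha.
  move=> v0 l f Hf; case: (Fam_elim _ _ _ _ _ Hf) => t [_ Hs <-]; rewrite mu_neg_Yes // mu_ge0 /= mu_compl //.
  have : alpha <= mu N i phi t Yes.
    apply: (Hrel t v0).1; case: (pselect (sat N t v0 phi)) => // H.
    by exfalso; apply: (Hs v0).
  lra.
have F7 : forall (v0 : V) l f, Fam N i phi l true f -> 0 <= f No <= 1 - alpha.
  move=> v0 l f Hf; case: (Fam_elim _ _ _ _ _ Hf) => t [_ Hs <-]; rewrite mu_ge0 /= mu_compl //.
  have := (Hrel t v0).1 (Hs v0); lra.
have F8 : forall (v0 : V) l f, Fam N i phi l false f -> 1 - beta <= f No.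
  move=> v0 l f Hf; case: (Fam_elim _ _ _ _ _ Hf) => t [_ Hs <-]; rewrite mu_compl //.
  have := (Hrel t v0).2 (Hs v0); lra.
have NE1 : forall s (v : V), ~ sat N s v (Know i (Neg phi)) ->
    Fam N i phi (L N i s) true !=set0 /\ Fam N i (Neg phi) (L N i s) false !=set0.
  move=> s v HK.
  case: (pselect (exists t v', L N i t = L N i s /\ sat N t v' phi)) => [[t [v' [Hl Hs]]]|H].
    have Hall : forall v'', sat N t v'' phi by move=> v''; exact/(sat_indep _ Hx t v' v'').1.
    split.
      by exists (mu N i phi t); exists t => //; split.
    exists (mu N i (Neg phi) t); exists t => //; split => // v'' /= Hn; exact: Hn.
  exfalso; apply: HK => t v' Hl Hs; apply: H; by exists t, v'.
have NE2 : forall s (v : V), ~ sat N s v (Know i phi) ->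
    Fam N i phi (L N i s) false !=set0 /\ Fam N i (Neg phi) (L N i s) true !=set0.
  move=> s v HK.
  case: (pselect (exists t v', L N i t = L N i s /\ ~ sat N t v' phi)) => [[t [v' [Hl Hs]]]|H].
    have Hall : forall v'', ~ sat N t v'' phi.
      by move=> v'' H'; apply: Hs; exact/(sat_indep _ Hx t v'' v').1.
    split.
      by exists (mu N i phi t); exists t => //; split.
    by exists (mu N i (Neg phi) t); exists t => //; split.
  exfalso; apply: HK => t v' Hl; case: (pselect (sat N t v' phi)) => // Hs.
  by exfalso; apply: H; exists t, v'.
have AnsN : forall s (v : V), Ad N i phi (L N i s) s (vcomp N v i) = Yes ->
    Ad N i (Neg phi) (L N i s) s (vcomp N v i) = No.
  by move=> s v H; case: Hr => Hr; rewrite Hr H.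
have AnsP : forall s (v : V), Ad N i (Neg phi) (L N i s) s (vcomp N v i) = Yes ->
    Ad N i phi (L N i s) s (vcomp N v i) = No.
  move=> s v; case: Hr => Hr; rewrite Hr; case: (Hc s v) => -> //.
split; [|split; [|split]].
- move=> Hab s v [HX HK].
  have hAB : 0 < alpha + beta.
    case: (ltrP 0 (alpha + beta)) => // H; exfalso; apply: Hab.
    have -> : alpha = 0 by lra. have -> : beta = 0 by lra. done.
  have [NEa NEb] := NE1 s v HK.
  split.
    rewrite /EvLow /= HX.
    have L1 := LOW a0 b0 (F1 v _) (F2 v _) (Hp_gen i phi s v Yes Hx HX) NEa.
    exact: L1.1 hAB.
  rewrite /EvUp /= (AnsN s v HX).
  have U1 := UP a0 b0 (F3 v _) (F4 v _) NEb.
  exact: U1.1 hAB.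
- case=> Ea Eb s v [HX HK].
  have [NEa NEb] := NE1 s v HK.
  split.
    rewrite /EvLow /= HX.
    have L1 := LOW a0 b0 (F1 v _) (F2 v _) (Hp_gen i phi s v Yes Hx HX) NEa.
    exact: L1.2 Eb.
  rewrite /EvUp /= (AnsN s v HX).
  have U1 := UP a0 b0 (F3 v _) (F4 v _) NEb.
  exact: U1.2 Eb.
- move=> Hab s v [HX HK].
  have hAB : 0 < (1 - beta) + (1 - alpha).
    case: (ltrP 0 ((1 - beta) + (1 - alpha))) => // H; exfalso; apply: Hab.
    have -> : alpha = 1 by lra. have -> : beta = 1 by lra. done.
  have -> : 2 - (alpha + beta) = (1 - beta) + (1 - alpha) by lra.
  have [NEa NEb] := NE2 s v HK.
  have hA : 0 <= 1 - beta by lra.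
  have hB : 0 <= 1 - alpha by lra.
  split.
    rewrite /EvLow /= HX.
    have L1 := LOW hA hB (F5 v _) (F6 v _) (Hp_gen i (Neg phi) s v Yes HxN HX) NEb.
    exact: L1.1 hAB.
  rewrite /EvUp /= (AnsP s v HX).
  have U1 := UP hA hB (F7 v _) (F8 v _) NEa.
  exact: U1.1 hAB.
- case=> Ea Eb s v [HX HK].
  have [NEa NEb] := NE2 s v HK.
  have hA : 0 <= 1 - beta by lra.
  have hB : 0 <= 1 - alpha by lra.
  have hB0 : 1 - alpha = 0 by lra.
  split.
    rewrite /EvLow /= HX.
    have L1 := LOW hA hB (F5 v _) (F6 v _) (Hp_gen i (Neg phi) s v Yes HxN HX) NEb.
    rewrite (L1.2 hB0); lra.
  rewrite /EvUp /= (AnsP s v HX).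
  have U1 := UP hA hB (F7 v _) (F8 v _) NEa.
  rewrite (U1.2 hB0); lra.
Qed.
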